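(* Let $A_S$ be a parabolic-retractable Artin group with Coxeter matrix $(m_{s,t})_{s,t\in S}$, and let $a,b,c\in S$ be pairwise distinct with $m_{a,b}$, $m_{a,c}$ and $m_{b,c}$ all odd. Then, up to permuting $a,b,c$, one has $m_{a,b}=m_{a,c}$ and $m_{b,c}$ divides $m_{a,b}$.
   Context: A Coxeter matrix over a finite set $S$ is a matrix $M=(m_{s,t})_{s,t\in S}$ with entries in $\mathbb{N}\cup\{\infty\}$, $m_{s,s}=1$, and $m_{s,t}=m_{t,s}\ge 2$ for $s\neq t$. Write $\Pi(s,t,m)$ for the alternating word $sts\cdots$ of length $m$. The Artin group is $A_S=\langle S\mid \Pi(s,t,m_{s,t})=\Pi(t,s,m_{s,t})$ for $s\neq t$, $m_{s,t}\neq\infty\rangle$. For $X\subseteq S$, $A_X$ is the subgroup generated by $X$. A retraction of $G$ onto a subgroup $H$ is a homomorphism $\varphi:G\to H$ with $\varphi|_H=\mathrm{id}_H$. $A_S$ is parabolic-retractable if it admits a retraction onto $A_X$ for every $X\subseteq S$. ''Odd'' means a finite odd integer. *)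

(* Defs.v *)
From mathcomp Require Import all_boot.
Set Implicit Arguments. Unset Strict Implicit. Unset Printing Implicit Defensive.

(* Coxeter matrix over a finite set S; entries in N ∪ {∞}, with None = ∞. *)
Record coxeter_matrix (S : finType) := CoxeterMatrix {
  cm :> S -> S -> option nat;
  cm_diag : forall s, cm s s = Some 1;
  cm_sym : forall s t, cm s t = cm t s;
  cm_offdiag : forall s t, s != t -> forall k, cm s t = Some k -> 2 <= k
}.

(* Words in S ∪ S^{-1}: a letter (s, false) is s, (s, true) is s^{-1}. *)
Definition word (S : finType) := seq (S * bool).

Definition Pi (S : finType) (s t : S) (m : nat) : word S :=
  mkseq (fun i => if odd i then (t, false) else (s, false)) m.

(* The congruence on words defining the Artin group A_S: generated by free
   cancellation and the Artin relations Π(s,t,m) = Π(t,s,m) (m finite, s≠t). *)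
Inductive artin_eq (S : finType) (M : coxeter_matrix S) : word S -> word S -> Prop :=
| ae_refl w : artin_eq M w w
| ae_sym u v : artin_eq M u v -> artin_eq M v u
| ae_trans u v w : artin_eq M u v -> artin_eq M v w -> artin_eq M u w
| ae_ctx p q u v : artin_eq M u v -> artin_eq M (p ++ u ++ q) (p ++ v ++ q)
| ae_cancel s b : artin_eq M [:: (s, b); (s, ~~ b)] [::]
| ae_rel s t k : s != t -> M s t = Some k -> artin_eq M (Pi s t k) (Pi t s k).

Definition in_parabolic (S : finType) (M : coxeter_matrix S) (X : {set S})
  (w : word S) : Prop :=
  exists w' : word S, all (fun l => l.1 \in X) w' /\ artin_eq M w w'.

Definition has_retraction (S : finType) (M : coxeter_matrix S) (X : {set S}) : Prop :=
  exists phi : word S -> word S,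
    [/\ forall u v, artin_eq M u v -> artin_eq M (phi u) (phi v),
        forall u v, artin_eq M (phi (u ++ v)) (phi u ++ phi v),
        forall w, in_parabolic M X (phi w)
      & forall w, in_parabolic M X w -> artin_eq M (phi w) w].

Definition parabolic_retractable (S : finType) (M : coxeter_matrix S) : Prop :=
  forall X : {set S}, has_retraction M X.

(* Main.v *)
Require Import Defs.
From mathcomp Require Import all_boot.
From mathcomp Require Import all_algebra all_field.
From mathcomp Require Import ring zify.
From Stdlib Require Import FunctionalExtensionality.
Import GRing.Theory Num.Theory.
Set Implicit Arguments. Unset Strict Implicit. Unset Printing Implicit Defensive.
Open Scope ring_scope.

Section M2.
Variable R : comPzRingType.
Record m2 := M2 { e11 : R; e12 : R; e21 : R; e22 : R }.
Definition mmul (x y : m2) := M2 (e11 x * e11 y + e12 x * e21 y) (e11 x * e12 y + e12 x * e22 y)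
  (e21 x * e11 y + e22 x * e21 y) (e21 x * e12 y + e22 x * e22 y).
Definition m1 := M2 1 0 0 1.
Definition msc (k : R) (x : m2) := M2 (k * e11 x) (k * e12 x) (k * e21 x) (k * e22 x).
Definition madd (x y : m2) := M2 (e11 x + e11 y) (e12 x + e12 y) (e21 x + e21 y) (e22 x + e22 y).
Definition mtr x := e11 x + e22 x.
Definition mdet x := e11 x * e22 x - e12 x * e21 x.
Definition madj x := M2 (e22 x) (- e12 x) (- e21 x) (e11 x).
Definition mapp x (v : R * R) := (e11 x * v.1 + e12 x * v.2, e21 x * v.1 + e22 x * v.2).
Fixpoint mpow x j := if j is j'.+1 then mmul x (mpow x j') else m1.
Fixpoint Pm (x y : m2) k := if k is k'.+1 then mmul x (Pm y x k') else m1.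

Lemma m2E x y : e11 x = e11 y -> e12 x = e12 y -> e21 x = e21 y -> e22 x = e22 y -> x = y.
Proof. by case: x; case: y => /= ? ? ? ? ? ? ? ? -> -> -> ->. Qed.

Ltac m2ring := apply: m2E; rewrite /= ; ring.

Lemma mmulA x y z : mmul x (mmul y z) = mmul (mmul x y) z.
Proof. m2ring. Qed.
Lemma mul1m x : mmul m1 x = x. Proof. case: x => *; m2ring. Qed.
Lemma mulm1 x : mmul x m1 = x. Proof. case: x => *; m2ring. Qed.
Lemma mdetM x y : mdet (mmul x y) = mdet x * mdet y. Proof. rewrite /mdet /=; ring. Qed.
Lemma mtrC x y : mtr (mmul x y) = mtr (mmul y x). Proof. rewrite /mtr /=; ring. Qed.
Lemma madjM x : mmul (madj x) x = msc (mdet x) m1. Proof. rewrite /mdet; m2ring. Qed.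
Lemma mCH x : mmul x x = madd (msc (mtr x) x) (msc (- mdet x) m1).
Proof. rewrite /mtr /mdet; m2ring. Qed.
Lemma mpowS x j : mpow x j.+1 = mmul (mpow x j) x.
Proof. elim: j => [|j IH]; first by rewrite /= mul1m mulm1. by rewrite -[mpow x j.+2]/(mmul x (mpow x j.+1)) {1}IH mmulA. Qed.
Lemma mappM x y v : mapp (mmul x y) v = mapp x (mapp y v).
Proof. case: v => a b; rewrite /mapp /=; congr pair; ring. Qed.
Lemma mscM k x y : mmul (msc k x) y = msc k (mmul x y). Proof. m2ring. Qed.
Lemma mmulsc k x y : mmul x (msc k y) = msc k (mmul x y). Proof. m2ring. Qed.
Lemma mpow_sc k x j : mpow (msc k x) j = msc (k ^+ j) (mpow x j).
Proof. elim: j => [|j IH] /=; first by m2ring. rewrite IH mscM mmulsc exprS; m2ring. Qed.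

Lemma Pm_add x y i j : Pm x y (i + j) = mmul (Pm x y i) (if odd i then Pm y x j else Pm x y j).
Proof.
elim: i x y => [|i IH] x y /=; first by rewrite mul1m.
rewrite IH mmulA; by case: (odd i).
Qed.
Lemma Pm_even x y l : Pm x y (l.*2) = mpow (mmul x y) l.
Proof. elim: l => [|l IH] //. rewrite doubleS /=. by rewrite mmulA IH. Qed.
Lemma Pm_odd x y l : Pm x y (l.*2.+1) = mmul (mpow (mmul x y) l) x.
Proof. by rewrite -addn1 Pm_add odd_double Pm_even /= mulm1. Qed.
End M2.

Section Cheb.
Variable R : comPzRingType.
Fixpoint chebp (t : R) j : R * R := if j is j'.+1 then ((chebp t j').2, t * (chebp t j').2 - (chebp t j').1) else (0, 1).
Definition cheb t j := (chebp t j).1.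
Lemma cheb0 t : cheb t 0 = 0. Proof. by []. Qed.
Lemma cheb1 t : cheb t 1 = 1. Proof. by []. Qed.
Lemma chebSS t j : cheb t j.+2 = t * cheb t j.+1 - cheb t j. Proof. by []. Qed.

Lemma mpow_cheb (Y : m2 R) j : mdet Y = 1 ->
  mpow Y j.+1 = madd (msc (cheb (mtr Y) j.+1) Y) (msc (- cheb (mtr Y) j) (m1 R)).
Proof.
move=> hd; elim: j => [|j IH]; first by apply: m2E; rewrite /= /cheb /=; ring.
rewrite -[mpow Y j.+2]/(mmul Y (mpow Y j.+1)) IH.
have -> : forall a b, mmul Y (madd (msc a Y) (msc b (m1 R))) = madd (msc a (mmul Y Y)) (msc b Y).
  by move=> a b; apply: m2E; rewrite /=; ring.
rewrite mCH hd chebSS; apply: m2E; rewrite /=; ring.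
Qed.
End Cheb.

Section ChebF.
Variable F : fieldType.
Lemma cheb_closed (w : F) j : w != 0 ->
  (w - w^-1) * cheb (w + w^-1) j = w ^+ j - w^-1 ^+ j.
Proof.
move=> w0.
suff: ((w - w^-1) * cheb (w + w^-1) j = w ^+ j - w^-1 ^+ j) /\
      ((w - w^-1) * cheb (w + w^-1) j.+1 = w ^+ j.+1 - w^-1 ^+ j.+1) by case.
elim: j => [|j [IH1 IH2]]; first by split; rewrite /cheb /= ?expr0 ?expr1; ring.
split => //.
rewrite chebSS mulrBr mulrCA IH2 IH1 !exprS.
field. done.
Qed.
End ChebF.

Section Braid.
Variable F : fieldType.
Definition mA (q c : F) := M2 (-q) c 0 1.
Definition mB (q c : F) := M2 1 0 c (-q).

Lemma prim_neq0 n (z : F) : (0 < n)%N -> n.-primitive_root z -> z != 0.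
Proof.
move=> n0 pz; apply/eqP=> z0; move: (prim_expr_order pz).
by rewrite z0 expr0n gtn_eqF // => /eqP; rewrite eq_sym oner_eq0.
Qed.

Lemma mpow_chebq (Y : m2 F) q j : q != 0 -> mdet (msc q^-1 Y) = 1 ->
  mpow Y j.+1 = msc (q ^+ j.+1) (madd (msc (cheb (mtr (msc q^-1 Y)) j.+1) (msc q^-1 Y))
     (msc (- cheb (mtr (msc q^-1 Y)) j) (m1 F))).
Proof.
move=> q0 hd; rewrite -mpow_cheb // -mpow_sc; congr mpow; by apply: m2E; rewrite /=; field.
Qed.

Lemma dih_braid (z q c : F) k : (2 <= k)%N -> (k.*2).-primitive_root z -> q != 0 ->
  c ^+ 2 = q * (z + z^-1) ^+ 2 -> Pm (mA q c) (mB q c) k = Pm (mB q c) (mA q c) k.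
Proof.
move=> k2 pz q0 hc.
have z0 : z != 0 by apply: (prim_neq0 _ pz); rewrite double_gt0; apply: leq_trans k2.
set w := z ^+ 2.
have w0 : w != 0 by rewrite expf_neq0.
have wk : w ^+ k = 1 by rewrite /w -exprM mul2n (prim_expr_order pz).
have zk : z ^+ k = -1.
  have : (z ^+ k) ^+ 2 == 1 by rewrite -exprM muln2 (prim_expr_order pz).
  rewrite sqrf_eq1 -(prim_order_dvd pz) => /orP [|/eqP //].
  rewrite -muln2 -{2}[k]muln1 dvdn_pmul2l ?dvdn1; last by apply: leq_trans k2.
  by move=> /eqP k1; rewrite k1 in k2.
case: (eqVneq k 2) => [k2e|kn2].
  subst k.
  have z2 : z ^+ 2 = -1 by [].
  have hk : z + z^-1 = 0.
    have -> : z^-1 = - z by apply: (mulfI z0); rewrite mulfV // mulrN -expr2 z2 opprK.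
    by rewrite subrr.
  move: hc; rewrite hk expr0n /= mulr0 => /eqP; rewrite expf_eq0 /= => /eqP ->.
  by apply: m2E; rewrite /=; ring.
have k3 : (3 <= k)%N by rewrite ltn_neqAle eq_sym kn2.
have wn : w - w^-1 != 0.
  apply/eqP => /eqP; rewrite subr_eq0 => /eqP hw.
  have : z ^+ 4 == 1.
    have -> : (4 = 2 * 2)%N by []. rewrite exprM -/w.
    by rewrite expr2 {2}hw mulfV.
  rewrite -(prim_order_dvd pz) => /dvdn_leq /= => /(_ isT).
  rewrite -muln2 => h; lia.
set t := w + w^-1.
set M := mmul (mA q c) (mB q c).
set N := mmul (mB q c) (mA q c).
have Mdet : mdet (msc q^-1 M) = 1 by rewrite /mdet /=; field.
have Ndet : mdet (msc q^-1 N) = 1 by rewrite /mdet /=; field.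
have kap2 : (z + z^-1) ^+ 2 = t + 2 by rewrite /t /w; field.
have Mtr : mtr (msc q^-1 M) = t by rewrite /mtr /=; apply: (mulfI q0); rewrite -!expr2 hc kap2; field.
have Ntr : mtr (msc q^-1 N) = t by rewrite /mtr /=; apply: (mulfI q0); rewrite -!expr2 hc kap2; field.
have [ok|ek] : k = (k./2).*2.+1 \/ k = (k./2).*2.
    by move: (odd_double_half k); case: (odd k) => h; [left|right]; rewrite -[X in X = _]h.
  rewrite ok !Pm_odd -/M -/N.
  have : (0 < k./2)%N by rewrite half_gt0; apply: leq_trans k3.
  move: ok; case: (k./2) => // l ok _.
  rewrite !(mpow_chebq _ q0) // Mtr Ntr.
  have wL : w * (w ^+ l.+1 * w ^+ l.+1) = 1.
    by rewrite -exprD addnn -exprS -ok.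
  have s0 : cheb t l.+2 + cheb t l.+1 = 0.
    apply: (mulfI wn); rewrite mulr0 mulrDr !cheb_closed // !exprVn (exprS w l.+1).
    move: wL; set a := w ^+ l.+1 => wL.
    have a0 : a != 0 by rewrite expf_neq0.
    have aa0 : a * a != 0 by rewrite mulf_neq0.
    have -> : w = (a * a)^-1 by apply: (mulIf aa0); rewrite mulVf // wL.
    by field; rewrite a0 oner_neq0.
  have hu0 : cheb t l = (c ^+ 2 / q - 1) * cheb t l.+1.
    move: s0; rewrite chebSS hc kap2 => /eqP; rewrite addrAC subr_eq0 => /eqP <-.
    field; done.
  rewrite hu0; apply: m2E; rewrite /=; field; done.
rewrite ek !Pm_even -/M -/N.
have : (0 < k./2)%N by rewrite half_gt0; apply: leq_trans k3.
move: ek; case: (k./2) => // l ek _.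
rewrite !(mpow_chebq _ q0) // Mtr Ntr.
have hu1 : cheb t l.+1 = 0.
  apply: (mulfI wn); rewrite mulr0 cheb_closed // exprVn.
  have -> : w ^+ l.+1 = -1 by rewrite /w -exprM mul2n -ek.
  by rewrite invrN invr1 subrr.
rewrite hu1; apply: m2E; rewrite /=; ring.
Qed.
End Braid.

Definition primr (n : nat) : algC := sval (C_prim_root_exists (ltn0Sn n)).
Lemma primrP n : (n.+1).-primitive_root (primr n).
Proof. exact: (svalP (C_prim_root_exists (ltn0Sn n))). Qed.
Definition zet (k : nat) := primr (k.*2).-1.
Lemma zetP k : (0 < k)%N -> (k.*2).-primitive_root (zet k).
Proof. move=> k0; have := primrP (k.*2).-1; rewrite prednK //; by rewrite double_gt0. Qed.
Definition kap (o : option nat) : algC := if o is Some k then zet k + (zet k)^-1 else 0.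

Section Rep.
Variables (S : finType) (M : coxeter_matrix S) (r : algC).
Definition qq := r ^+ 2.
Definition cc (s t : S) := r * kap (M s t).
Definition rho (s : S) (v : S -> algC) : S -> algC := fun u =>
  if u == s then - qq * v s + \sum_(t | t != s) cc s t * v t else v u.
Definition rhoi s (v : S -> algC) : S -> algC := fun u =>
  if u == s then (\sum_(t | t != s) cc s t * v t - v s) / qq else v u.
Definition rhol (l : S * bool) := if l.2 then rhoi l.1 else rho l.1.
Fixpoint ev (w : word S) v := if w is l :: w' then rhol l (ev w' v) else v.

Lemma ev_cat u w v : ev (u ++ w) v = ev u (ev w v).
Proof. by elim: u => //= l u ->. Qed.

Hypothesis r0 : r != 0.
Lemma qq0 : qq != 0. Proof. by rewrite expf_neq0. Qed.

Lemma rho_rhoi s v : rho s (rhoi s v) = v.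
Proof.
apply: functional_extensionality => u; rewrite {1}/rho.
case: (eqVneq u s) => [->|us]; last by rewrite /rhoi (negbTE us).
under eq_bigr => x xs do rewrite /rhoi (negbTE xs).
rewrite /rhoi eqxx.
have := qq0; set A := \sum_(x | _) _ => q0; by field.
Qed.

Lemma rhoi_rho s v : rhoi s (rho s v) = v.
Proof.
apply: functional_extensionality => u; rewrite {1}/rhoi.
case: (eqVneq u s) => [->|us]; last by rewrite /rho (negbTE us).
under eq_bigr => x xs do rewrite /rho (negbTE xs).
rewrite /rho eqxx.
have := qq0; set A := \sum_(x | _) _ => q0; by field.
Qed.

Section Pair.
Variables (s t : S).
Hypothesis st : s != t.
Definition Dd := (1 + qq) ^+ 2 - cc s t ^+ 2.
Hypothesis D0 : Dd != 0.
Definition alp (x y : S) (v : S -> algC) := \sum_(u | (u != x) && (u != y)) cc x u * v u.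
Definition fp (v : S -> algC) : algC * algC :=
  (((1 + qq) * alp s t v + cc s t * alp t s v) / Dd, ((1 + qq) * alp t s v + cc s t * alp s t v) / Dd).
Definition FF v (L : m2 algC) : S -> algC := fun u =>
  if u == s then (fp v).1 + (mapp L (v s - (fp v).1, v t - (fp v).2)).1
  else if u == t then (fp v).2 + (mapp L (v s - (fp v).1, v t - (fp v).2)).2 else v u.

Definition Am := mA qq (cc s t).
Definition Bm := mB qq (cc s t).
Definition Aim := M2 (- qq^-1) (cc s t / qq) 0 1.
Definition Bim := M2 1 0 (cc s t / qq) (- qq^-1).

Lemma FF1 v : FF v (m1 _) = v.
Proof.
apply: functional_extensionality => u; rewrite /FF /=.
by case: eqP => [->|_]; [|case: eqP => [->|_]]; rewrite // !mul1r !mul0r ?addr0 ?add0r addrC subrK.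
Qed.

Lemma sum_split x y (f : S -> algC) : x != y ->
  \sum_(u | u != x) f u = f y + \sum_(u | (u != x) && (u != y)) f u.
Proof. by move=> xy; rewrite (bigD1 y) //= eq_sym. Qed.

Lemma alpFF v L x y : ((x == s) && (y == t)) || ((x == t) && (y == s)) -> alp x y (FF v L) = alp x y v.
Proof.
move=> h; apply: eq_bigr => u /andP [ux uy]; rewrite /FF.
case/orP: h => /andP [/eqP ? /eqP ?]; subst x y; by rewrite (negbTE ux) (negbTE uy).
Qed.

Lemma rho_FF v L : rho s (FF v L) = FF v (mmul Am L).
Proof.
apply: functional_extensionality => u; rewrite /rho.
case: (eqVneq u s) => [->|us].
  rewrite (sum_split _ st) -/(alp s t (FF v L)) alpFF ?eqxx //.
  have ts : t != s by rewrite eq_sym.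
  rewrite /FF (negbTE ts) !eqxx mappM.
  rewrite /fp /= /mapp /=.
  set a := alp s t v; set b := alp t s v.
  set x := v s; set y := v t.
  move: D0; rewrite /Dd => D0'.
  field; done.
rewrite /FF (negbTE us) mappM; case: eqP => // _.
rewrite /mapp /=; ring.
Qed.

Lemma rho_FFt v L : rho t (FF v L) = FF v (mmul Bm L).
Proof.
have ts : t != s by rewrite eq_sym.
have cts : cc t s = cc s t by rewrite /cc cm_sym.
apply: functional_extensionality => u; rewrite /rho.
case: (eqVneq u t) => [->|ut].
  rewrite (sum_split _ ts) -/(alp t s (FF v L)) alpFF ?eqxx ?orbT //.
  rewrite /FF (negbTE ts) !eqxx mappM cts.
  rewrite /fp /= /mapp /=.
  set a := alp s t v; set b := alp t s v.
  set x := v s; set y := v t.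
  move: D0; rewrite /Dd => D0'.
  field; done.
rewrite /FF (negbTE ut) mappM; case: eqP => // _.
rewrite /mapp /=; ring.
Qed.

Lemma rhoi_FF v L : rhoi s (FF v L) = FF v (mmul Aim L).
Proof.
have -> : FF v L = rho s (FF v (mmul Aim L)).
  rewrite rho_FF mmulA; congr FF.
  have -> : mmul Am Aim = m1 _ by have := qq0; rewrite /Am /Aim => q0; apply: m2E; rewrite /=; field.
  by rewrite mul1m.
by rewrite rhoi_rho.
Qed.

Lemma rhoi_FFt v L : rhoi t (FF v L) = FF v (mmul Bim L).
Proof.
have -> : FF v L = rho t (FF v (mmul Bim L)).
  rewrite rho_FFt mmulA; congr FF.
  have -> : mmul Bm Bim = m1 _ by have := qq0; rewrite /Bm /Bim => q0; apply: m2E; rewrite /=; field.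
  by rewrite mul1m.
by rewrite rhoi_rho.
Qed.

Definition lm (l : S * bool) := if l.1 == s then (if l.2 then Aim else Am)
  else if l.1 == t then (if l.2 then Bim else Bm) else m1 _.
Fixpoint b2 (w : word S) := if w is l :: w' then mmul (lm l) (b2 w') else m1 _.
Lemma b2_cat u w : b2 (u ++ w) = mmul (b2 u) (b2 w).
Proof. elim: u => [|l u IH] /=; first by rewrite mul1m. by rewrite IH mmulA. Qed.

Definition inst (l : S * bool) := (l.1 == s) || (l.1 == t).

Lemma ev_FF w v : all inst w -> ev w v = FF v (b2 w).
Proof.
elim: w => [|[x bb] w IH] /=; first by rewrite FF1.
move=> /andP [hx hw]; rewrite IH // /rhol /lm /=.
have ts : t != s by rewrite eq_sym.
case/orP: hx => /= /eqP ->; rewrite ?eqxx ?(negbTE ts); case: bb => /=;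
 by rewrite ?rhoi_FF ?rho_FF ?rhoi_FFt ?rho_FFt.
Qed.
End Pair.

Lemma Pi_S (x y : S) k : Pi x y k.+1 = (x, false) :: Pi y x k.
Proof.
rewrite /Pi /mkseq /= -add1n iotaDl -map_comp; congr cons; apply: eq_map => i /=.
by rewrite add0n; case: (odd i).
Qed.

Lemma Pi_inst x y k : all (inst x y) (Pi x y k) /\ all (inst x y) (Pi y x k).
Proof.
elim: k x y => [|k IH] x y; first by [].
rewrite !Pi_S /= /inst /= !eqxx orbT /=.
have [h1 h2] := IH x y; split.
- by move: h2; apply: sub_all => l; rewrite /inst orbC.
- by move: h1; apply: sub_all => l; rewrite /inst orbC.
Qed.

Lemma b2_Pi x y k : x != y -> b2 x y (Pi x y k) = Pm (Am x y) (Bm x y) k /\ b2 x y (Pi y x k) = Pm (Bm x y) (Am x y) k.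
Proof.
move=> xy; have yx : y != x by rewrite eq_sym.
elim: k => [|k [IH1 IH2]] //; rewrite !Pi_S /= IH1 IH2 /lm /= eqxx (negbTE yx) eqxx; by [].
Qed.

Lemma ev_braid x y k v : x != y -> M x y = Some k -> Dd x y != 0 ->
  ev (Pi x y k) v = ev (Pi y x k) v.
Proof.
move=> xy hk D0.
have k2 : (2 <= k)%N by apply: (cm_offdiag xy hk).
have [i1 i2] := Pi_inst x y k.
have [b1 b2'] := b2_Pi k xy.
rewrite (ev_FF xy D0 _ i1) (ev_FF xy D0 _ i2) b1 b2'.
congr FF; apply: (dih_braid k2 (zetP _)); first by apply: leq_trans k2.
  exact: qq0.
by rewrite /cc hk /kap exprMn.
Qed.

Lemma ev_artin u w : (forall x y k, x != y -> M x y = Some k -> Dd x y != 0) ->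
  artin_eq M u w -> forall v, ev u v = ev w v.
Proof.
move=> HD h; induction h as [w|u w _ IH|u w z _ IH1 _ IH2|p q u w _ IH|x bb|x y k xy hk] => v.
- by [].
- by rewrite IH.
- by rewrite IH1 IH2.
- by rewrite !ev_cat IH.
- case: bb; rewrite /= /rhol /=; by [rewrite rhoi_rho | rewrite rho_rhoi].
- apply: ev_braid => //; exact: HD hk.
Qed.
End Rep.

Section Mat.
Variable F : fieldType.
Implicit Types (Y Z W U : m2 F).

Definition sc U := [&& e12 U == 0, e21 U == 0 & e11 U == e22 U].

Lemma braid_T Y Z k : odd k -> Pm Y Z k = Pm Z Y k ->
  [/\ mmul Y (mmul (Pm Y Z k) (Pm Y Z k)) = mmul (mmul (Pm Y Z k) (Pm Y Z k)) Y,
      mmul Z (mmul (Pm Y Z k) (Pm Y Z k)) = mmul (mmul (Pm Y Z k) (Pm Y Z k)) Z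
    & mmul (Pm Y Z k) (Pm Y Z k) = mpow (mmul Y Z) k].
Proof.
move=> ok hb.
have h1 : mmul Y (Pm Y Z k) = mmul (Pm Y Z k) Z.
  rewrite [X in mmul Y X]hb -[mmul Y _]/(Pm Y Z k.+1) -addn1 Pm_add ok /=.
  by rewrite mulm1.
have h2 : mmul Z (Pm Y Z k) = mmul (Pm Y Z k) Y.
  rewrite -[mmul Z _]/(Pm Z Y k.+1) -addn1 Pm_add ok /= mulm1.
  by rewrite hb.
split.
- by rewrite mmulA h1 -mmulA h2 mmulA.
- by rewrite mmulA h2 -mmulA h1 mmulA.
- by rewrite -Pm_even -addnn Pm_add ok -hb.
Qed.

Variables (q c : F).
Hypothesis q1 : 1 + q != 0.

Lemma commA W : mmul (mA q c) W = mmul W (mA q c) ->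
  e21 W = 0 /\ (1 + q) * e12 W = c * (e22 W - e11 W).
Proof.
case: W => w11 w12 w21 w22 h.
have e2 := f_equal (@e21 F) h; have e1 := f_equal (@e12 F) h.
move: e2 e1; rewrite /= => e2 e1.
have w0 : w21 = 0.
  apply: (mulfI q1); rewrite mulr0; move/eqP: e2; rewrite -subr_eq0 => /eqP <-; ring.
split => //; move/eqP: e1; rewrite -subr_eq0 => /eqP e1.
apply/eqP; rewrite -subr_eq0; apply/eqP; rewrite -[RHS]oppr0 -e1; ring.
Qed.

Lemma commA_inv W : e21 W = 0 -> (1 + q) * e12 W = c * (e22 W - e11 W) ->
  mmul (mA q c) W = mmul W (mA q c).
Proof.
case: W => w11 w12 w21 w22 /= -> h; apply: m2E; rewrite /=; try ring.
apply/eqP; rewrite -subr_eq0; apply/eqP.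
transitivity (- ((1 + q) * w12 - c * (w22 - w11))); first ring.
by rewrite h subrr oppr0.
Qed.

Lemma key_commute U W : mmul (mA q c) U = mmul U (mA q c) -> ~~ sc U ->
  mmul W U = mmul U W -> mmul (mA q c) W = mmul W (mA q c).
Proof.
move=> /commA [u21 hu] nsc hw.
have hne : e22 U - e11 U != 0.
  apply: contra nsc => /eqP h.
  have h1 : e11 U = e22 U by apply/eqP; rewrite eq_sym -subr_eq0; apply/eqP.
  have h2 : e12 U = 0 by apply: (mulfI q1); rewrite hu mulr0 h mulr0.
  by rewrite /sc h1 h2 u21 !eqxx.
have e2 := f_equal (@e21 F) hw; have e1 := f_equal (@e12 F) hw.
move: e2 e1; case: U hu hne u21 {nsc hw} => u11 u12 u21 u22 /= hu hne ->.
case: W => w11 w12 w21 w22 /= e2 e1.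
have w0 : w21 = 0.
  apply: (mulfI hne); rewrite mulr0 -oppr0; move/eqP: e2; rewrite -subr_eq0 => /eqP <-; ring.
apply: commA_inv => //=.
apply: (mulfI hne); rewrite /=.
transitivity ((1 + q) * (w12 * (u22 - u11))); first ring.
have -> : w12 * (u22 - u11) = u12 * (w22 - w11).
  apply/eqP; rewrite -subr_eq0; apply/eqP.
  transitivity ((w11 * u12 + w12 * u22) - (u11 * w12 + u12 * w22)); first ring.
  by rewrite e1 subrr.
transitivity (((1 + q) * u12) * (w22 - w11)); first ring.
rewrite hu; ring.
Qed.

Lemma cancel_left W Y Z : mdet W != 0 -> mmul W Y = mmul W Z -> Y = Z.
Proof.
move=> d0 h.
have : mmul (madj W) (mmul W Y) = mmul (madj W) (mmul W Z) by rewrite h.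
rewrite !mmulA madjM !mscM !mul1m => h2.
apply: m2E; apply: (mulfI d0);
  [exact: (f_equal (@e11 F) h2) | exact: (f_equal (@e12 F) h2)
  | exact: (f_equal (@e21 F) h2) | exact: (f_equal (@e22 F) h2)].
Qed.

Lemma mdet_pow Y j : mdet (mpow Y j) = mdet Y ^+ j.
Proof. elim: j => [|j IH] /=; first by rewrite /mdet /=; ring. by rewrite mdetM IH exprS. Qed.

Lemma commute_braid_eq X p : mmul (mA q c) X = mmul X (mA q c) -> odd p ->
  Pm (mA q c) X p = Pm X (mA q c) p -> mdet (mA q c) != 0 -> mdet X != 0 -> X = mA q c.
Proof.
move=> hc op hb dA dX.
have hp : p = (p./2).*2.+1 by rewrite -{1}[p]odd_double_half op.
move: hb; rewrite hp !Pm_odd -hc => h.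
symmetry; apply: (cancel_left _ h).
by rewrite mdet_pow mdetM expf_neq0 // mulf_neq0.
Qed.
End Mat.

Section Cheb2.
Variable F : fieldType.
Lemma cheb_sc (Y : m2 F) k : mdet Y = 1 -> sc (mpow Y k.+1) ->
  cheb (mtr Y) k.+1 = 0 \/ sc Y.
Proof.
move=> hd; rewrite mpow_cheb // /sc /= => /and3P [/eqP h12 /eqP h21 /eqP h11].
case: (eqVneq (cheb (mtr Y) k.+1) 0) => [|u0]; [by left|right].
rewrite !mulr0 !addr0 in h12 h21.
move: h12 h21 => /eqP; rewrite mulf_eq0 (negbTE u0) /= => ->.
move=> /eqP; rewrite mulf_eq0 (negbTE u0) /= => -> /=.
move: h11; rewrite !mulr1 => /addIr /(mulfI u0) ->; by rewrite eqxx.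
Qed.

Lemma final_div (z : F) m k (Y : m2 F) : (2 < m)%N -> odd m -> (m.*2).-primitive_root z ->
  mdet Y = 1 -> mtr Y = z ^+ 2 + (z ^+ 2)^-1 -> sc (mpow Y k.+1) -> (m %| k.+1)%N.
Proof.
move=> m2 om pz hd ht hs.
have z0 : z != 0 by apply: (prim_neq0 _ pz); rewrite double_gt0; apply: leq_trans m2.
set w := z ^+ 2 in ht.
have w0 : w != 0 by rewrite expf_neq0.
have wn : w - w^-1 != 0.
  apply/eqP => /eqP; rewrite subr_eq0 => /eqP hw.
  have : z ^+ 4 == 1.
    have -> : (4 = 2 * 2)%N by []. rewrite exprM -/w.
    by rewrite expr2 {2}hw mulfV.
  rewrite -(prim_order_dvd pz) => /dvdn_leq /= => /(_ isT).
  rewrite -muln2 => h; lia.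
case: (cheb_sc hd hs) => [hu|].
  have : w ^+ k.+1 - w^-1 ^+ k.+1 = 0 by rewrite -cheb_closed // -ht hu mulr0.
  move/eqP; rewrite subr_eq0 exprVn => /eqP h.
  have : w ^+ k.+1 * w ^+ k.+1 == 1 by rewrite {2}h mulfV // expf_neq0.
  rewrite -exprD /w -exprM -(prim_order_dvd pz) addnn.
  have -> : (2 * k.+1.*2 = (2 * k.+1) * 2)%N by rewrite -muln2 mulnA.
  rewrite -muln2 dvdn_pmul2r // mulnC Gauss_dvdl //.
  by rewrite coprimen2.
rewrite /sc => /and3P [/eqP h12 /eqP h21 /eqP h11].
move: hd ht; rewrite /mdet /mtr h12 h21 h11 mul0r subr0 => hd ht.
exfalso; move/eqP: wn; apply.
have : (w - w^-1) ^+ 2 = 0.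
  transitivity ((w + w^-1) ^+ 2 - 4); first by field.
  by rewrite -ht -hd; ring.
by move/eqP; rewrite expf_eq0 /= => /eqP.
Qed.
End Cheb2.

Lemma poly_inf_roots (G : {poly algC}) : (forall n, (2 <= n)%N -> G.[n%:R] = 0) -> G = 0.
Proof.
move=> h; apply/eqP; apply: contraT => G0.
have := @max_poly_roots _ G [seq (i.+2)%:R | i <- iota 0 (size G)] G0.
rewrite size_map size_iota ltnn; apply.
  by apply/allP => z /mapP [i _ ->]; rewrite /root h.
rewrite map_inj_uniq ?iota_uniq // => i j /eqP; by rewrite eqr_nat => /eqP [] ->.
Qed.

Lemma pigeon (g Q : {poly algC}) d : Q != 0 ->
  (forall n, (2 <= n)%N -> root Q (g.[n%:R] / (n%:R) ^+ d)) -> exists z, g = z *: 'X^d.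
Proof.
move=> Q0 h.
have [rs hrs] := closed_field_poly_normal Q.
set G := \prod_(z <- rs) (g - z *: 'X^d).
have : G = 0.
  apply: poly_inf_roots => n n2.
  have n0 : (n%:R : algC) ^+ d != 0 by rewrite expf_neq0 // pnatr_eq0 -lt0n; apply: leq_trans n2.
  have := h n n2; rewrite /root {1}hrs hornerZ horner_prod mulf_eq0 lead_coef_eq0 (negbTE Q0) /=.
  rewrite prodf_seq_eq0 => /hasP [z zin /=]; rewrite !hornerE subr_eq0 => /eqP hz.
  rewrite /G horner_prod; apply/eqP; rewrite prodf_seq_eq0; apply/hasP; exists z => //=.
  by rewrite !hornerE -hz mulfVK // subrr.
move/eqP; rewrite prodf_seq_eq0 => /hasP [z _ /=]; rewrite subr_eq0 => /eqP ->.
by exists z.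
Qed.

Section Words.
Variables (S : finType) (M : coxeter_matrix S).
Definition posw (w : word S) := count (fun l : S * bool => ~~ l.2) w.
Definition negw (w : word S) := count (fun l : S * bool => l.2) w.
Fixpoint Pw (u v : word S) k := if k is k'.+1 then u ++ Pw v u k' else [::].

Lemma ae_cat u u' v v' : artin_eq M u u' -> artin_eq M v v' -> artin_eq M (u ++ v) (u' ++ v').
Proof.
move=> h1 h2; apply: (@ae_trans _ _ _ (u' ++ v)).
  exact: (ae_ctx [::] v h1).
by have := ae_ctx u' [::] h2; rewrite !cats0.
Qed.

Lemma Pw_congr k u v u' v' : artin_eq M u u' -> artin_eq M v v' -> artin_eq M (Pw u v k) (Pw u' v' k).
Proof.
elim: k u v u' v' => [|k IH] u v u' v' h1 h2 /=; first exact: ae_refl.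
by apply: ae_cat => //; apply: IH.
Qed.

Lemma count_inv u w : artin_eq M u w -> posw u + negw w = posw w + negw u.
Proof.
move=> h; induction h as [w|u w _ IH|u w z _ IH1 _ IH2|p q u w _ IH|x bb|x y k xy hk].
- by [].
- by lia.
- by lia.
- by move: IH; rewrite /posw /negw !count_cat; lia.
- by case: bb.
- suff h : forall s t, posw (Pi s t k) = k /\ negw (Pi s t k) = 0%N.
    by have [-> ->] := h x y; have [-> ->] := h y x.
  elim: k {xy hk} => [|k IH] s t; first by [].
  by rewrite Pi_S /posw /negw /=; have [h1 h2] := IH t s; move: h1 h2; rewrite /posw /negw => -> ->.
Qed.

Lemma Pw_count_odd l u v :
  (posw (Pw u v l.*2.+1) + negw (Pw v u l.*2.+1) + (posw v + negw u) =
   posw (Pw v u l.*2.+1) + negw (Pw u v l.*2.+1) + (posw u + negw v))%N.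
Proof.
elim: l => [|l IH]; first by rewrite /posw /negw /= !cats0; lia.
rewrite doubleS /=; move: IH; rewrite /posw /negw /= !count_cat; lia.
Qed.

Lemma all_Pw (P : pred (S * bool)) u v k : all P u -> all P v -> all P (Pw u v k).
Proof. elim: k u v => [|k IH] u v hu hv //=; by rewrite all_cat hu IH. Qed.

Lemma b2_Pw r x y u v k : b2 M r x y (Pw u v k) = Pm (b2 M r x y u) (b2 M r x y v) k.
Proof. elim: k u v => [|k IH] u v //=; by rewrite b2_cat IH. Qed.
End Words.

Definition mmap (R1 R2 : comPzRingType) (f : R1 -> R2) (L : m2 R1) : m2 R2 :=
  M2 (f (e11 L)) (f (e12 L)) (f (e21 L)) (f (e22 L)).

Lemma mmap_mul (r : algC) (L1 L2 : m2 {poly algC}) :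
  mmap (fun p => p.[r]) (mmul L1 L2) = mmul (mmap (fun p => p.[r]) L1) (mmap (fun p => p.[r]) L2).
Proof. by apply: m2E; rewrite /= !hornerE. Qed.

Lemma mscMM (R : comPzRingType) (a b : R) (L1 L2 : m2 R) : msc (a * b) (mmul L1 L2) = mmul (msc a L1) (msc b L2).
Proof. apply: m2E; rewrite /=; ring. Qed.

Section Plane.
Variables (S : finType) (M : coxeter_matrix S) (x y : S).
Hypothesis xy : x != y.
Let kp := kap (M x y).
Definition PA : m2 {poly algC} := M2 (- 'X^2) (kp%:P * 'X) 0 1.
Definition PAi : m2 {poly algC} := M2 (-1) (kp%:P * 'X) 0 ('X^2).
Definition PB : m2 {poly algC} := M2 1 0 (kp%:P * 'X) (- 'X^2).
Definition PBi : m2 {poly algC} := M2 ('X^2) 0 (kp%:P * 'X) (-1).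
Definition plm (l : S * bool) := if l.1 == x then (if l.2 then PAi else PA)
  else if l.1 == y then (if l.2 then PBi else PB) else m1 _.
Fixpoint pb2 (w : word S) := if w is l :: w' then mmul (plm l) (pb2 w') else m1 _.

Lemma pb2_eval r w : r != 0 -> all (inst x y) w ->
  msc (r ^+ (2 * negw w)) (b2 M r x y w) = mmap (fun p => p.[r]) (pb2 w).
Proof.
move=> r0; elim: w => [|[s bb] w IH] /=.
  by move=> _; apply: m2E; rewrite /= !hornerE; ring.
move=> /andP [hs hw]; rewrite mmap_mul -IH // /negw /= mulnDr exprD mscMM; congr mmul.
have yx : y != x by rewrite eq_sym.
rewrite /lm /plm /=; case/orP: hs => /= /eqP ->; rewrite ?eqxx ?(negbTE yx);
  case: bb; apply: m2E; rewrite /= ?hornerE /qq /cc -/kp; try field; simpl; try field; done.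
Qed.

Lemma det_b2 r w : r != 0 -> all (inst x y) w ->
  mdet (b2 M r x y w) * (- qq r) ^+ negw w = (- qq r) ^+ posw w.
Proof.
move=> r0; elim: w => [|[s bb] w IH] /=.
  by move=> _; rewrite /mdet /=; ring.
move=> /andP [hs hw]; rewrite mdetM /negw /posw /= !exprD -/(negw w) -/(posw w) -IH //.
have yx : y != x by rewrite eq_sym.
have q0 : qq r != 0 by rewrite /qq expf_neq0.
rewrite /lm /=; case/orP: hs => /= /eqP ->; rewrite ?eqxx ?(negbTE yx);
  case: bb; rewrite /mdet /= ?expr0 ?expr1; try field; simpl; try field; done.
Qed.

Lemma fix_b2 m w : M x y = Some m -> (0 < m)%N -> all (inst x y) w ->
  mapp (b2 M (zet m) x y w) (1, 1) = (1, 1).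
Proof.
move=> hm m0; have z0 : zet m != 0 by apply: (prim_neq0 _ (zetP m0)); rewrite double_gt0.
elim: w => [|[s bb] w IH] /=.
  by move=> _; rewrite /mapp /=; congr pair; ring.
move=> /andP [hs hw]; rewrite mappM IH //.
have yx : y != x by rewrite eq_sym.
rewrite /lm /=; case/orP: hs => /= /eqP ->; rewrite ?eqxx ?(negbTE yx);
  case: bb; rewrite /mapp /= /qq /cc hm /kap; congr pair; try field; simpl; try field; done.
Qed.

Lemma plane_eq r u w : r != 0 -> Dd M r x y != 0 -> all (inst x y) u -> all (inst x y) w ->
  (forall v, ev M r u v = ev M r w v) -> b2 M r x y u = b2 M r x y w.
Proof.
move=> r0 D0 hu hw h.
pose ex : S -> algC := fun i => if i == x then 1 else 0.
pose ey : S -> algC := fun i => if i == y then 1 else 0.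
have yx : y != x by rewrite eq_sym.
have fpx : fp M r x y ex = (0, 0).
  rewrite /fp /alp !big1 ?mulr0 ?addr0 ?mul0r //.
    by move=> i /andP [_ ix]; rewrite /ex (negbTE ix) mulr0.
  by move=> i /andP [ix _]; rewrite /ex (negbTE ix) mulr0.
have fpy : fp M r x y ey = (0, 0).
  rewrite /fp /alp !big1 ?mulr0 ?addr0 ?mul0r //.
    by move=> i /andP [iy _]; rewrite /ey (negbTE iy) mulr0.
  by move=> i /andP [_ iy]; rewrite /ey (negbTE iy) mulr0.
have hx := h ex; have hy := h ey.
rewrite (ev_FF r0 xy D0 ex hu) (ev_FF r0 xy D0 ex hw) in hx.
rewrite (ev_FF r0 xy D0 ey hu) (ev_FF r0 xy D0 ey hw) in hy.
have hx1 := f_equal (fun f => f x) hx; have hx2 := f_equal (fun f => f y) hx.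
have hy1 := f_equal (fun f => f x) hy; have hy2 := f_equal (fun f => f y) hy.
move: hx1 hx2 hy1 hy2; rewrite /FF fpx fpy /ex /ey /= eqxx (negbTE yx) (negbTE xy) eqxx /=.
rewrite !subr0 !add0r !mulr1 !mulr0 !addr0 !add0r.
move=> h1 h2 h3 h4; exact: m2E.
Qed.
End Plane.

Lemma cheb_poly (t : algC) j : (cheb ('X : {poly algC}) j).[t] = cheb t j.
Proof.
suff : (chebp 'X j).1.[t] = (chebp t j).1 /\ (chebp ('X : {poly algC}) j).2.[t] = (chebp t j).2 by case.
elim: j => [|j [IH1 IH2]] /=; first by rewrite !hornerE.
by split => //; rewrite !hornerE IH1 IH2.
Qed.

Lemma cheb2 j : cheb (2 : algC) j = j%:R.
Proof.
suff : (chebp (2 : algC) j).1 = j%:R /\ (chebp (2 : algC) j).2 = j.+1%:R by case.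
elim: j => [|j [IH1 IH2]] /=; first by [].
split => //; rewrite IH1 IH2 !mulrS; ring.
Qed.

Lemma sc_msc (F : fieldType) (a : F) U : sc U -> sc (msc a U).
Proof. by rewrite /sc /= => /and3P [/eqP -> /eqP -> /eqP ->]; rewrite mulr0 !eqxx. Qed.

Lemma per_n (q c z : algC) (X : m2 algC) m p q' :
  1 + q != 0 -> q != 0 -> c != 0 -> c ^+ 2 = q * (z + z^-1) ^+ 2 -> (m.*2).-primitive_root z ->
  (2 < m)%N -> odd m -> odd p -> odd q' -> mdet X = - q ->
  Pm (mA q c) X p = Pm X (mA q c) p -> Pm (mB q c) X q' = Pm X (mB q c) q' ->
  (m %| q')%N \/ sc (mpow (msc q^-1 (mmul (mA q c) X)) p).
Proof.
move=> q1 q0 c0 hc pz m2 om op oq dX hb1 hb2.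
have z0 : z != 0 by apply: (prim_neq0 _ pz); rewrite double_gt0; apply: leq_trans m2.
have dA : mdet (mA q c) = - q by rewrite /mdet /=; ring.
have [hA hX hT] := braid_T op hb1.
case: (boolP (sc (mmul (Pm (mA q c) X p) (Pm (mA q c) X p)))) => hs.
  right; rewrite mpow_sc -hT; exact: sc_msc.
left.
have XA : X = mA q c.
  apply: (commute_braid_eq _ op hb1); rewrite ?dA ?dX ?oppr_eq0 //.
  exact: (key_commute q1 hA hs hX).
rewrite XA in hb2.
have [hA' hB' hT'] := braid_T oq (esym hb2).
case: (boolP (sc (mmul (Pm (mA q c) (mB q c) q') (Pm (mA q c) (mB q c) q')))) => hs'; last first.
  have := key_commute q1 hA' hs' hB' => /(commA q1) [] /= c00.
  by rewrite c00 eqxx in c0.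
have hq' : q' = q'.-1.+1 by rewrite prednK //; case: q' oq {hb2 hA' hB' hT' hs'}.
rewrite hq'; apply: (final_div (z := z) (Y := msc q^-1 (mmul (mA q c) (mB q c))) m2 om pz).
- by rewrite /mdet /=; field.
- have hc' : c * c = q * (z + z^-1) ^+ 2 by rewrite -expr2.
  by rewrite /mtr /= hc'; field; rewrite ?q0 ?z0 ?oner_neq0.
- by rewrite mpow_sc -hq' -hT'; exact: sc_msc.
Qed.

Lemma Dd_n (S : finType) (M : coxeter_matrix S) n s t k : (2 <= n)%N -> M s t = Some k -> (0 < k)%N ->
  Dd M n%:R s t != 0.
Proof.
move=> n2 hk k0; set z := zet k.
have pz := zetP k0.
have z0 : z != 0 by apply: (prim_neq0 _ pz); rewrite double_gt0.
have n0 : (n%:R : algC) != 0 by rewrite pnatr_eq0 -lt0n; apply: leq_trans n2.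
have z2k : (z ^+ 2) ^+ k = 1 by rewrite -exprM mul2n (prim_expr_order pz).
have hn : (n%:R : algC) ^+ (2 * k) != 1.
  rewrite -natrX pnatr_eq1; apply/eqP => h.
  have : (1 ^ (2 * k) < n ^ (2 * k))%N by rewrite ltn_exp2r // muln_gt0 k0.
  by rewrite exp1n h.
rewrite /Dd /qq /cc hk /kap -/z.
have -> : (1 + (n%:R : algC) ^+ 2) ^+ 2 - ((n%:R : algC) * (z + z^-1)) ^+ 2 = (1 - (n%:R) ^+ 2 * z ^+ 2) * (1 - (n%:R) ^+ 2 / z ^+ 2).
  by field.
rewrite mulf_neq0 //; apply: contra hn; rewrite subr_eq0 => /eqP h.
  have e : (((n%:R : algC) ^+ 2) * z ^+ 2) ^+ k = 1 by rewrite -h expr1n.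
  by rewrite exprMn z2k mulr1 in e; rewrite exprM e.
have h2 : (n%:R : algC) ^+ 2 = z ^+ 2.
  have := congr1 (fun a => a * z ^+ 2) h; rewrite /= mul1r mulfVK ?expf_neq0 //.
by apply/eqP; rewrite exprM h2 z2k.
Qed.

Lemma tr_fix (L : m2 algC) : mapp L (1, 1) = (1, 1) -> mtr L = 1 + mdet L.
Proof.
case: L => a b c d; rewrite /mapp /mtr /mdet /= => [[h1 h2]].
have -> : b = 1 - a by rewrite -h1; ring.
have -> : d = 1 - c by rewrite -h2; ring.
ring.
Qed.

Lemma kap_neq0 m : (2 < m)%N -> zet m + (zet m)^-1 != 0.
Proof.
move=> m2; have m0 : (0 < m)%N by apply: leq_trans m2.
have pz := zetP m0.
have z0 : zet m != 0 by apply: (prim_neq0 _ pz); rewrite double_gt0.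
apply/eqP => h.
have h2 : zet m ^+ 2 = -1.
  have : zet m * (zet m + (zet m)^-1) = 0 by rewrite h mulr0.
  by rewrite mulrDr mulfV // -expr2 => /eqP; rewrite addr_eq0 => /eqP.
have : zet m ^+ 4 == 1 by rewrite (_ : 4 = 2 * 2)%N // exprM h2 expr2 mulrNN mulr1.
rewrite -(prim_order_dvd pz) => /dvdn_leq h4; have := h4 isT; rewrite -muln2 => h5; lia.
Qed.

Lemma mdet_sc (a : algC) L : mdet (msc a L) = a ^+ 2 * mdet L.
Proof. rewrite /mdet /=; ring. Qed.
Lemma mtr_sc (a : algC) L : mtr (msc a L) = a * mtr L.
Proof. rewrite /mtr /=; ring. Qed.
Lemma mtr_map (r : algC) (L : m2 {poly algC}) : (mtr L).[r] = mtr (mmap (fun p => p.[r]) L).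
Proof. by rewrite /mtr /= hornerD. Qed.

Lemma pair_div (S : finType) (M : coxeter_matrix S) x y z m p q' :
  parabolic_retractable M -> x != y -> x != z -> y != z ->
  M x y = Some m -> M x z = Some p -> M y z = Some q' -> odd m -> odd p -> odd q' ->
  (m %| q')%N || (m %| p)%N.
Proof.
move=> HR xy xz yz hm hp hq om op oq.
have m2 : (2 < m)%N.
  have := cm_offdiag xy hm; case: m om {hm} => [|[|[|m]]] //.
have m0 : (0 < m)%N by apply: leq_trans m2.
have [phi [hc hmu hpar hid]] := HR [set x; y].
have phi_nil : artin_eq M (phi [::]) [::].
  by apply: hid; exists [::]; split => //; exact: ae_refl.
have phi_one s : s \in [set x; y] -> artin_eq M (phi [:: (s, false)]) [:: (s, false)].
  by move=> sX; apply: hid; exists [:: (s, false)]; split; [rewrite /= sX | exact: ae_refl].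
have phi_Pi : forall s t k, artin_eq M (phi (Pi s t k)) (Pw (phi [:: (s, false)]) (phi [:: (t, false)]) k).
  move=> s t k; elim: k s t => [|k IH] s t; first exact: phi_nil.
  rewrite Pi_S -cat1s; apply: ae_trans (hmu _ _) _; apply: ae_cat; [exact: ae_refl | exact: IH].
have [wz [wzX wzE]] := hpar [:: (z, false)].
have wzI : all (inst x y) wz by move: wzX; apply: sub_all => l; rewrite /inst in_set2.
have rel s k : s \in [set x; y] -> M s z = Some k ->
    artin_eq M (Pw [:: (s, false)] wz k) (Pw wz [:: (s, false)] k).
  move=> sX hk.
  have sz : s != z by move: sX; rewrite in_set2 => /orP [] /eqP ->.
  have h0 := hc _ _ (ae_rel sz hk).
  apply: ae_trans (Pw_congr _ (ae_sym (phi_one _ sX)) (ae_sym wzE)) _.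
  apply: ae_trans (ae_sym (phi_Pi _ _ _)) _.
  apply: ae_trans h0 _.
  apply: ae_trans (phi_Pi _ _ _) _.
  exact: Pw_congr wzE (phi_one _ sX).
have rel1 := rel x p (set21 x y) hp.
have rel2 := rel y q' (set22 x y) hq.
have cnt : posw wz = (negw wz).+1.
  have hp2 : p = (p./2).*2.+1 by rewrite -{1}[p]odd_double_half op.
  have := Pw_count_odd (p./2) [:: (x, false)] wz; rewrite -hp2.
  have := count_inv rel1; rewrite /posw /negw /=; lia.
set N := negw wz.
have instx : all (inst x y) [:: (x, false)] by rewrite /= /inst /= eqxx.
have insty : all (inst x y) [:: (y, false)] by rewrite /= /inst /= eqxx orbT.
have detX : forall r : algC, r != 0 -> mdet (b2 M r x y wz) = - qq r.
  move=> r r0; have := det_b2 M xy r0 wzI; rewrite cnt -/N exprS => h.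
  have q0 : (- qq r) ^+ N != 0 by rewrite expf_neq0 // oppr_eq0 /qq expf_neq0.
  by apply: (mulIf q0); rewrite h mulrC.
have at_r : forall r : algC, r != 0 ->
    (forall s t k, s != t -> M s t = Some k -> Dd M r s t != 0) ->
    [/\ Pm (Am M r x y) (b2 M r x y wz) p = Pm (b2 M r x y wz) (Am M r x y) p,
        Pm (Bm M r x y) (b2 M r x y wz) q' = Pm (b2 M r x y wz) (Bm M r x y) q'
      & mdet (b2 M r x y wz) = - qq r].
  move=> r r0 HD.
  have yx : y != x by rewrite eq_sym.
  have bx : b2 M r x y [:: (x, false)] = Am M r x y by rewrite /= /lm /= eqxx mulm1.
  have by' : b2 M r x y [:: (y, false)] = Bm M r x y by rewrite /= /lm /= (negbTE yx) eqxx mulm1.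
  split.
  - rewrite -bx -!b2_Pw; apply: (plane_eq xy r0 (HD _ _ _ xy hm)); try by apply: all_Pw.
    move=> v; exact: (ev_artin r0 HD rel1 v).
  - rewrite -by' -!b2_Pw; apply: (plane_eq xy r0 (HD _ _ _ xy hm)); try by apply: all_Pw.
    move=> v; exact: (ev_artin r0 HD rel2 v).
  - exact: detX.
have HDn : forall n, (2 <= n)%N -> forall s t k, s != t -> M s t = Some k -> Dd M n%:R s t != 0.
  move=> n n2 s t k st hk; apply: (Dd_n n2 hk); have := cm_offdiag st hk; lia.
have nz : forall n, (2 <= n)%N -> (n%:R : algC) != 0.
  by move=> n n2; rewrite pnatr_eq0 -lt0n; apply: leq_trans n2.
case: (boolP (m %| q')%N) => [//|nq] /=.
have facts : forall n, (2 <= n)%N ->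
   [/\ 1 + qq n%:R != 0, qq (n%:R : algC) != 0, cc M n%:R x y != 0
     & cc M n%:R x y ^+ 2 = qq n%:R * (zet m + (zet m)^-1) ^+ 2].
  move=> n n2; split.
  - by rewrite /qq -natrX -mulrS pnatr_eq0.
  - by rewrite /qq expf_neq0 // nz.
  - by rewrite /cc hm /kap mulf_neq0 ?nz ?kap_neq0.
  - by rewrite /cc hm /kap exprMn.
have sc_n : forall n, (2 <= n)%N ->
    sc (mpow (msc (qq n%:R)^-1 (mmul (Am M n%:R x y) (b2 M n%:R x y wz))) p).
  move=> n n2; have [h1 h2 h3] := at_r _ (nz n n2) (HDn n n2).
  have [f1 f2 f3 f4] := facts n n2.
  have := per_n f1 f2 f3 f4 (zetP m0) m2 om op oq h3 h1 h2.
  by case => // h; rewrite h in nq.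
have p0 : (0 < p)%N by move: op; case: (p).
have hp1 : p = p.-1.+1 by rewrite prednK.
set Q := cheb ('X : {poly algC}) p * ('X^2 - 4%:P).
have Q0 : Q != 0.
  rewrite mulf_neq0 //.
    apply/eqP => h; have := cheb_poly 2 p; rewrite h horner0 cheb2 => /eqP.
    by rewrite eq_sym pnatr_eq0 => /eqP p00; rewrite p00 in p0.
  apply/eqP => h; have := congr1 (fun P => P.[0]) h; rewrite /= !hornerE expr0n /= sub0r => /eqP.
  by rewrite oppr_eq0 pnatr_eq0.
set g := mtr (mmul (PA M x y) (pb2 M x y wz)).
have geval : forall r : algC, r != 0 -> g.[r] = r ^+ (2 * N) * mtr (mmul (Am M r x y) (b2 M r x y wz)).
  move=> r r0; rewrite /g mtr_map mmap_mul -(pb2_eval M xy r0 wzI) -/N.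
  have -> : mmap (fun p => p.[r]) (PA M x y) = Am M r x y.
    by apply: m2E; rewrite /= !hornerE /qq /cc; ring.
  by rewrite mmulsc mtr_sc.
have Yf : forall n, (2 <= n)%N ->
    mdet (msc (qq n%:R)^-1 (mmul (Am M n%:R x y) (b2 M n%:R x y wz))) = 1 /\
    g.[n%:R] / (n%:R) ^+ (2 * N + 2) = mtr (msc (qq n%:R)^-1 (mmul (Am M n%:R x y) (b2 M n%:R x y wz))).
  move=> n n2; have r0 := nz n n2; split.
    rewrite mdet_sc mdetM detX // /Am /mdet /=; field.
    by rewrite /qq expf_neq0.
  by rewrite geval // mtr_sc /qq exprD; field; rewrite r0 expf_neq0.
have roots_n : forall n, (2 <= n)%N -> root Q (g.[n%:R] / (n%:R) ^+ (2 * N + 2)).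
  move=> n n2; have [dY tY] := Yf n n2.
  rewrite tY /root /Q hornerM cheb_poly.
  have := sc_n n n2; rewrite {1}hp1 => hs.
  case: (cheb_sc dY hs) => [|hsc]; first by rewrite -hp1 => ->; rewrite mul0r.
  move: hsc dY; set Y := msc _ _; rewrite /sc /mdet /mtr => /and3P [/eqP -> /eqP -> /eqP ->] hd.
  rewrite mulf_eq0; apply/orP; right; rewrite !hornerE.
  apply/eqP; transitivity (4 * (e22 Y * e22 Y - 0 * 0) - 4); first by ring.
  by rewrite hd mulr1 subrr.
have [zz hg] := pigeon Q0 roots_n.
set zt := zet m.
have pz := zetP m0.
have z0 : zt != 0 by apply: (prim_neq0 _ pz); rewrite double_gt0.
have hzz : zz = zt ^+ 2 + (zt ^+ 2)^-1.
  have e := congr1 (fun P => P.[zt]) hg; rewrite /= hornerZ hornerXn geval // in e.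
  have fx := fix_b2 xy hm m0 (w := (x, false) :: wz); rewrite /= /lm /= eqxx in fx.
  rewrite (tr_fix (fx _)) in e; last by rewrite /= /inst /= eqxx wzI.
  rewrite mdetM detX // /Am /mdet /= in e.
  set P := zt ^+ (2 * N) in e.
  have P0 : P != 0 by rewrite expf_neq0.
  apply: (mulIf (mulf_neq0 P0 (expf_neq0 2 z0))).
  rewrite exprD -/P in e; rewrite -e /qq /zt; field.
  by rewrite z0.
have [dY2 tY2] := Yf 2 (leqnn 2).
have hs2 := sc_n 2 (leqnn 2); rewrite {1}hp1 in hs2.
have tr2 : mtr (msc (qq 2%:R)^-1 (mmul (Am M 2%:R x y) (b2 M 2%:R x y wz))) = zt ^+ 2 + (zt ^+ 2)^-1.
  rewrite -tY2 hg hornerZ hornerXn hzz; field.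
  by rewrite z0 expf_neq0 // nz.
rewrite hp1; exact: (final_div m2 om pz dY2 tr2 hs2).
Qed.

Close Scope ring_scope.

Lemma dvd_anti' {m n : nat} : (m %| n) -> (n %| m) -> m = n.
Proof. by move=> h1 h2; apply/eqP; rewrite eqn_dvd h1 h2. Qed.

Theorem lemma3p5 (S : finType) (M : coxeter_matrix S) (a b c : S)
  (mab mac mbc : nat) :
  parabolic_retractable M ->
  a != b -> a != c -> b != c ->
  M a b = Some mab -> M a c = Some mac -> M b c = Some mbc ->
  odd mab -> odd mac -> odd mbc ->
  [\/ mab = mac /\ (mbc %| mab),
      mab = mbc /\ (mac %| mab)
    | mac = mbc /\ (mab %| mac)].
Proof.
move=> HR ab ac bc hab hac hbc oab oac obc.
have ba : b != a by rewrite eq_sym.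
have ca : c != a by rewrite eq_sym.
have cb : c != b by rewrite eq_sym.
have h1 := pair_div HR ab ac bc hab hac hbc oab oac obc.
have h2 := pair_div HR ac ab cb hac hab (etrans (cm_sym M c b) hbc) oac oab obc.
have h3 := pair_div HR bc ba ca hbc (etrans (cm_sym M b a) hab) (etrans (cm_sym M c a) hac) obc oab oac.
move: h1 h2 h3 => /orP [d1|d1] /orP [d2|d2] /orP [d3|d3].
- have e := dvd_anti' d2 d3; apply: Or33; split => //; by rewrite e.
- have e := dvd_anti' d1 d3; apply: Or32; split => //; by rewrite e.
- have e1 := dvd_anti' (dvdn_trans d1 d3) d2; apply: Or31; split => //; by rewrite e1.
- have e := dvd_anti' d1 d3; apply: Or32; split => //; by rewrite e.
- have e := dvd_anti' d2 d3; apply: Or33; split => //.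
- have e1 := dvd_anti' d1 (dvdn_trans d2 d3); apply: Or31; split => //; by rewrite e1 (dvdn_trans d2 d3).
- have e := dvd_anti' d1 d2; apply: Or31; split => //; by rewrite e.
- have e := dvd_anti' d1 d2; apply: Or31; split => //.
Qed.
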